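(* Let $(\mathfrak g,\mathcal F_\bullet\mathfrak g,R)$ be a filtered Rota–Baxter Lie algebra over a field of characteristic zero. Then, as vector spaces, $\widehat U(\mathfrak g)=\varprojlim U(\mathfrak g)/\mathcal F_nU(\mathfrak g)$ coincides with $\widehat U(\mathfrak g_R)=\varprojlim U(\mathfrak g_R)/\mathcal F_nU(\mathfrak g_R)$.
   Context: Filtered Rota–Baxter Lie algebra: a Lie algebra $\mathfrak g$ with subspaces $\mathfrak g=\mathcal F_1\mathfrak g\supset\mathcal F_2\mathfrak g\supset\cdots$, $[\mathcal F_n\mathfrak g,\mathcal F_m\mathfrak g]\subset\mathcal F_{n+m}\mathfrak g$, and linear $R$ with $[R(x),R(y)]=R([R(x),y]+[x,R(y)]+[x,y])$ and $R(\mathcal F_n\mathfrak g)\subset\mathcal F_n\mathfrak g$. $\mathcal R:U(\mathfrak g)\to U(\mathfrak g)$ is the linear map with $\mathcal R(1)=1$, $\mathcal R(x)=R(x)$, $\mathcal R(xh)=R(x)\mathcal R(h)-\mathcal R([R(x),h])$. $U(\mathfrak g_R)$, the universal enveloping algebra of the descendant Lie algebra $(\mathfrak g,[x,y]_R=[R(x),y]+[x,R(y)]+[x,y])$, is identified with the vector space $U(\mathfrak g)$ equipped with product $a\star b=a_{(1)}\mathcal R(a_{(2)})\,b\,S(\mathcal R(a_{(3)}))$. $\mathcal F_0U(\mathfrak g)=\mathcal F_0U(\mathfrak g_R)=U(\mathfrak g)$; for $n\ge1$, $\mathcal F_nU(\mathfrak g)$ is the span of $x_1\cdots x_k$ and $\mathcal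 F_nU(\mathfrak g_R)$ the span of $x_1\star\cdots\star x_k$, over $k\ge1$, $x_i\in\mathcal F_{n_i}\mathfrak g$, $\sum n_i\ge n$. *)

(* Defs.v *)
From HB Require Import structures.
From mathcomp Require Import all_boot all_order all_algebra.
Set Implicit Arguments. Unset Strict Implicit. Unset Printing Implicit Defensive.
Import GRing.Theory.
Local Open Scope ring_scope.

Section Defs.
Variable K : fieldType.

Definition subspace (V : lmodType K) (P : V -> Prop) : Prop :=
  P 0 /\ (forall (a : K) x y, P x -> P y -> P (a *: x + y)).

Definition is_lie_bracket (V : lmodType K) (br : V -> V -> V) : Prop :=
  [/\ forall (a : K) x y z, br (a *: x + y) z = a *: br x z + br y z,
      forall (a : K) x y z, br x (a *: y + z) = a *: br x y + br x z,
      forall x, br x x = 0 &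
      forall x y z, br x (br y z) + br y (br z x) + br z (br x y) = 0].

(* F_1 g = g ⊃ F_2 g ⊃ ..., subspaces, [F_n, F_m] ⊂ F_(n+m)  (indices n >= 1;
   the value F 0 is irrelevant) *)
Definition lie_filtration (V : lmodType K) (br : V -> V -> V)
  (F : nat -> V -> Prop) : Prop :=
  [/\ forall x, F 1%N x,
      forall n, (1 <= n)%N -> subspace (F n),
      forall n x, (1 <= n)%N -> F n.+1 x -> F n x &
      forall n m x y, (1 <= n)%N -> (1 <= m)%N -> F n x -> F m y ->
        F (n + m)%N (br x y)].

Definition filtered_rota_baxter (V : lmodType K) (br : V -> V -> V)
  (F : nat -> V -> Prop) (R : V -> V) : Prop :=
  [/\ forall (a : K) x y, R (a *: x + y) = a *: R x + R y,
      forall x y, br (R x) (R y) = R (br (R x) y + br x (R y) + br x y) &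
      forall n x, (1 <= n)%N -> F n x -> F n (R x)].

Definition lie_hom (V : lmodType K) (br : V -> V -> V) (B : algType K)
  (f : V -> B) : Prop :=
  (forall (a : K) x y, f (a *: x + y) = a *: f x + f y) /\
  (forall x y, f (br x y) = f x * f y - f y * f x).

Definition alg_hom (A B : algType K) (phi : A -> B) : Prop :=
  [/\ forall (a : K) x y, phi (a *: x + y) = a *: phi x + phi y,
      forall x y, phi (x * y) = phi x * phi y & phi 1 = 1].

Definition is_UEA (V : lmodType K) (br : V -> V -> V) (A : algType K)
  (iota : V -> A) : Prop :=
  lie_hom br iota /\
  forall (B : algType K) (f : V -> B), lie_hom br f ->
    exists phi : A -> B,
      [/\ alg_hom phi, forall x, phi (iota x) = f x &
          forall psi : A -> B, alg_hom psi -> (forall x, psi (iota x) = f x) ->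
            forall u, psi u = phi u].

Definition span (A : lmodType K) (S : A -> Prop) : A -> Prop :=
  fun u => exists (k : nat) (c : 'I_k -> K) (v : 'I_k -> A),
    (forall i, S (v i)) /\ u = \sum_(i < k) c i *: v i.

Definition FU (V : lmodType K) (F : nat -> V -> Prop) (A : algType K)
  (iota : V -> A) (n : nat) : A -> Prop :=
  if n == 0%N then (fun _ => True) else
  span (fun b => exists (k : nat) (x : 'I_k -> V) (d : 'I_k -> nat),
    [/\ (0 < k)%N, forall i, (1 <= d i)%N /\ F (d i) (x i),
        (n <= \sum_(i < k) d i)%N & b = \prod_(i < k) iota (x i)]).

(* For x in g and b in U(g), the product x * b in U(g_R), transported to U(g):
   x ⋆ b = x_(1) R(x_(2)) b S(R(x_(3))) = x b + R(x) b - b R(x)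
   (x is primitive, R(1) = 1, R(x) = R x, S(y) = -y for y in g). *)
Definition star_left (V : lmodType K) (R : V -> V) (A : algType K)
  (iota : V -> A) (x : V) (b : A) : A :=
  iota x * b + iota (R x) * b - b * iota (R x).

(* x_1 ⋆ x_2 ⋆ ... ⋆ x_k  (⋆ is associative with unit 1) *)
Definition star_word (V : lmodType K) (R : V -> V) (A : algType K)
  (iota : V -> A) (k : nat) (x : 'I_k -> V) : A :=
  foldr (fun i b => star_left R iota (x i) b) 1 (enum 'I_k).

(* F_n U(g_R), as a subspace of the underlying vector space U(g). *)
Definition FUR (V : lmodType K) (F : nat -> V -> Prop) (R : V -> V)
  (A : algType K) (iota : V -> A) (n : nat) : A -> Prop :=
  if n == 0%N then (fun _ => True) else
  span (fun b => exists (k : nat) (x : 'I_k -> V) (d : 'I_k -> nat),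
    [/\ (0 < k)%N, forall i, (1 <= d i)%N /\ F (d i) (x i),
        (n <= \sum_(i < k) d i)%N & b = star_word R iota x]).

(* Two decreasing filtrations P, Q of one vector space define the same
   completion lim V/P_n = lim V/Q_n (via the maps induced by the identity of V)
   iff they are mutually cofinal. *)
Definition same_completion (A : lmodType K) (P Q : nat -> A -> Prop) : Prop :=
  (forall n, exists m, forall u, P m u -> Q n u) /\
  (forall n, exists m, forall u, Q m u -> P n u).

End Defs.

(* Main.v *)
Require Import Defs.
From HB Require Import structures.
From mathcomp Require Import all_boot all_order all_algebra.
Set Implicit Arguments. Unset Strict Implicit.
Import GRing.Theory.
Local Open Scope ring_scope.

Inductive spanI (K : fieldType) (A : lmodType K) (S : A -> Prop) : A -> Prop :=
| spanI0 : spanI S 0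
| spanIc : forall a x y, S x -> spanI S y -> spanI S (a *: x + y).

Lemma spanI_comb (K : fieldType) (A : lmodType K) (S : A -> Prop) a x y :
  spanI S x -> spanI S y -> spanI S (a *: x + y).
Proof.
move=> hx hy; elim: hx => [|b s z Ss _ IH]; first by rewrite scaler0 add0r.
by rewrite scalerDr scalerA -addrA; apply: spanIc.
Qed.

Lemma spanI_gen (K : fieldType) (A : lmodType K) (S : A -> Prop) x :
  S x -> spanI S x.
Proof.
by move=> Sx; rewrite -[x]addr0 -[x in x + _]scale1r; apply: spanIc => //; apply: spanI0.
Qed.

Lemma spanI_add (K : fieldType) (A : lmodType K) (S : A -> Prop) x y :
  spanI S x -> spanI S y -> spanI S (x + y).
Proof. by move=> hx hy; rewrite -[x]scale1r; apply: spanI_comb. Qed.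

Lemma spanI_opp (K : fieldType) (A : lmodType K) (S : A -> Prop) x :
  spanI S x -> spanI S (- x).
Proof.
move=> hx; rewrite -[- x]addr0 -scaleN1r; apply: spanI_comb => //; exact: spanI0.
Qed.

Lemma spanI_sub (K : fieldType) (A : lmodType K) (S T : A -> Prop) u :
  (forall x, S x -> spanI T x) -> spanI S u -> spanI T u.
Proof.
move=> hST; elim=> [|a x y Sx _ IH]; [exact: spanI0 | apply: spanI_comb; auto].
Qed.

Lemma spanI_mono (K : fieldType) (A : lmodType K) (S T : A -> Prop) u :
  (forall x, S x -> T x) -> spanI S u -> spanI T u.
Proof. move=> h; apply: spanI_sub => x /h; exact: spanI_gen. Qed.

Lemma span_spanI (K : fieldType) (A : lmodType K) (S : A -> Prop) u :
  Defs.span S u -> spanI S u.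
Proof.
case=> k [c [v [Sv ->]]]; elim: k c v Sv => [|k IH] c v Sv.
  by rewrite big_ord0; apply: spanI0.
rewrite big_ord_recl; apply: spanIc => //; apply: IH => i; exact: Sv.
Qed.

Lemma spanI_span (K : fieldType) (A : lmodType K) (S : A -> Prop) u :
  spanI S u -> Defs.span S u.
Proof.
elim=> [|a x y Sx _ [k [c [v [Sv ->]]]]].
  exists 0%N, (fun _ => 0), (fun _ => 0); split; last by rewrite big_ord0.
  by move=> [m]; rewrite ltn0.
exists k.+1, (fun i => if unlift ord0 i is Some j then c j else a),
  (fun i => if unlift ord0 i is Some j then v j else x); split.
  by move=> i; case: (unlift ord0 i).
by rewrite big_ord_recl unlift_none; congr (_ + _); apply: eq_bigr => i _; rewrite liftK.
Qed.

Lemma spanI_map (K : fieldType) (A B : lmodType K) (f : A -> B) S T u :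
  f 0 = 0 -> (forall a x y, f (a *: x + y) = a *: f x + f y) ->
  (forall g, S g -> spanI T (f g)) -> spanI S u -> spanI T (f u).
Proof.
move=> f0 fl hg; elim=> [|a x y Sx _ IH]; first by rewrite f0; apply: spanI0.
rewrite fl; apply: spanI_comb => //; exact: hg.
Qed.

Definition consf (T : Type) (k : nat) (x0 : T) (y : 'I_k -> T) : 'I_k.+1 -> T :=
  fun i => if unlift ord0 i is Some j then y j else x0.

Lemma big_consf (R0 T : Type) (idx : R0) (op : R0 -> R0 -> R0) (G : T -> R0)
  k (x0 : T) (y : 'I_k -> T) :
  \big[op/idx]_(i < k.+1) G (consf x0 y i) = op (G x0) (\big[op/idx]_(i < k) G (y i)).
Proof.
rewrite big_ord_recl /consf unlift_none; congr (op _ _).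
by apply: eq_bigr => i _; rewrite liftK.
Qed.

Definition snocf (T : Type) (k : nat) (x0 : T) (y : 'I_k -> T) : 'I_k.+1 -> T :=
  fun i => if unlift ord_max i is Some j then y j else x0.

Lemma big_snocf (R0 T : Type) (idx : R0) (op : Monoid.law idx) (G : T -> R0)
  k (x0 : T) (y : 'I_k -> T) :
  \big[op/idx]_(i < k.+1) G (snocf x0 y i) = op (\big[op/idx]_(i < k) G (y i)) (G x0).
Proof.
rewrite big_ord_recr /snocf unlift_none; congr (op _ _).
apply: eq_bigr => i _.
have -> : widen_ord (leqnSn k) i = lift ord_max i by apply: val_inj => /=; rewrite /bump leqNgt ltn_ord.
by rewrite liftK.
Qed.

Definition PUk (K : fieldType) (V : lmodType K) (F : nat -> V -> Prop)
  (A : algType K) (iota : V -> A) (k D : nat) (b : A) : Prop :=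
  exists (x : 'I_k -> V) (d : 'I_k -> nat),
    [/\ forall i, (1 <= d i)%N /\ F (d i) (x i), (D <= \sum_(i < k) d i)%N &
        b = \prod_(i < k) iota (x i)].

Definition PRk (K : fieldType) (V : lmodType K) (F : nat -> V -> Prop) (R : V -> V)
  (A : algType K) (iota : V -> A) (k D : nat) (b : A) : Prop :=
  exists (x : 'I_k -> V) (d : 'I_k -> nat),
    [/\ forall i, (1 <= d i)%N /\ F (d i) (x i), (D <= \sum_(i < k) d i)%N &
        b = star_word R iota x].

Lemma star_word_ext (K : fieldType) (V : lmodType K) (R : V -> V)
  (A : algType K) (iota : V -> A) k (x y : 'I_k -> V) :
  (forall i, x i = y i) -> star_word R iota x = star_word R iota y.
Proof. by move=> h; rewrite /star_word; elim: (enum _) => //= i s ->; rewrite h. Qed.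

Lemma star_wordS (K : fieldType) (V : lmodType K) (R : V -> V)
  (A : algType K) (iota : V -> A) k (x : 'I_k.+1 -> V) :
  star_word R iota x = star_left R iota (x ord0) (star_word R iota (fun j => x (lift ord0 j))).
Proof. by rewrite /star_word enum_ordSl /= foldr_map. Qed.

Lemma star_word0 (K : fieldType) (V : lmodType K) (R : V -> V)
  (A : algType K) (iota : V -> A) (x : 'I_0 -> V) : star_word R iota x = 1.
Proof.
rewrite /star_word; have -> : enum 'I_0 = [::] by apply/size0nil; rewrite size_enum_ord.
by [].
Qed.

From mathcomp Require Import zify.

Lemma sum_consf k e (d : 'I_k -> nat) :
  (\sum_(i < k.+1) consf e d i = e + \sum_(i < k) d i)%N.
Proof. exact: (@big_consf nat nat 0%N addn id). Qed.

Lemma sum_snocf k e (d : 'I_k -> nat) :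
  (\sum_(i < k.+1) snocf e d i = \sum_(i < k) d i + e)%N.
Proof. exact: (@big_snocf nat nat 0%N addn id). Qed.

Lemma prod_consf (K : fieldType) (V : lmodType K) (A : algType K) (iota : V -> A)
  k y (x : 'I_k -> V) :
  \prod_(i < k.+1) iota (consf y x i) = iota y * \prod_(i < k) iota (x i).
Proof. exact: big_consf. Qed.

Lemma prod_snocf (K : fieldType) (V : lmodType K) (A : algType K) (iota : V -> A)
  k y (x : 'I_k -> V) :
  \prod_(i < k.+1) iota (snocf y x i) = \prod_(i < k) iota (x i) * iota y.
Proof. exact: big_snocf. Qed.

Lemma consf_prop (T : Type) k (P : T -> Prop) x0 (x : 'I_k -> T) :
  P x0 -> (forall i, P (x i)) -> forall i, P (consf x0 x i).
Proof. by move=> h0 h i; rewrite /consf; case: (unlift ord0 i). Qed.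

Lemma snocf_prop (T : Type) k (P : T -> Prop) x0 (x : 'I_k -> T) :
  P x0 -> (forall i, P (x i)) -> forall i, P (snocf x0 x i).
Proof. by move=> h0 h i; rewrite /snocf; case: (unlift ord_max i). Qed.

Lemma PUk_mono (K : fieldType) (V : lmodType K) (F : nat -> V -> Prop)
  (A : algType K) (iota : V -> A) k D D' b :
  PUk F iota k D b -> (D' <= D)%N -> PUk F iota k D' b.
Proof.
by case=> x [d [h1 h2 h3]] h; exists x, d; split => //; apply: leq_trans h h2.
Qed.

Lemma PRk_mono (K : fieldType) (V : lmodType K) (F : nat -> V -> Prop) (R : V -> V)
  (A : algType K) (iota : V -> A) k D D' b :
  PRk F R iota k D b -> (D' <= D)%N -> PRk F R iota k D' b.
Proof.
by case=> x [d [h1 h2 h3]] h; exists x, d; split => //; apply: leq_trans h h2.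
Qed.

Lemma PUk_cons (K : fieldType) (V : lmodType K) (F : nat -> V -> Prop)
  (A : algType K) (iota : V -> A) k D g e y :
  PUk F iota k D g -> (1 <= e)%N -> F e y -> PUk F iota k.+1 (e + D) (iota y * g).
Proof.
case=> x [d [hxd hD ->]] he hy.
exists (consf y x), (consf e d); split.
- move=> i; rewrite /consf; case: (unlift ord0 i) => [j|] //; exact: hxd.
- by rewrite sum_consf leq_add2l.
- by rewrite prod_consf.
Qed.

Lemma PUk_snoc (K : fieldType) (V : lmodType K) (F : nat -> V -> Prop)
  (A : algType K) (iota : V -> A) k D g e y :
  PUk F iota k D g -> (1 <= e)%N -> F e y -> PUk F iota k.+1 (e + D) (g * iota y).
Proof.
case=> x [d [hxd hD ->]] he hy.
exists (snocf y x), (snocf e d); split.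
- move=> i; rewrite /snocf; case: (unlift ord_max i) => [j|] //; exact: hxd.
- by rewrite sum_snocf; lia.
- by rewrite prod_snocf.
Qed.

Lemma PRk_cons (K : fieldType) (V : lmodType K) (F : nat -> V -> Prop) (R : V -> V)
  (A : algType K) (iota : V -> A) k D g e y :
  PRk F R iota k D g -> (1 <= e)%N -> F e y ->
  PRk F R iota k.+1 (e + D) (star_left R iota y g).
Proof.
case=> x [d [hxd hD ->]] he hy.
exists (consf y x), (consf e d); split.
- move=> i; rewrite /consf; case: (unlift ord0 i) => [j|] //; exact: hxd.
- by rewrite sum_consf leq_add2l.
- rewrite star_wordS {1}/consf unlift_none; congr star_left.
  by apply: star_word_ext => i; rewrite /consf liftK.
Qed.

Lemma star_left0 (K : fieldType) (V : lmodType K) (R : V -> V)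
  (A : algType K) (iota : V -> A) x : star_left R iota x 0 = 0.
Proof. by rewrite /star_left !mulr0 !mul0r !(addr0, subr0). Qed.

Lemma star_left_lin (K : fieldType) (V : lmodType K) (R : V -> V)
  (A : algType K) (iota : V -> A) x a u v :
  star_left R iota x (a *: u + v) = a *: star_left R iota x u + star_left R iota x v.
Proof.
rewrite /star_left !mulrDr !mulrDl -!scalerAr -!scalerAl opprD.
rewrite scalerBr scalerDr.
rewrite [X in X + _ = _]addrACA [LHS]addrACA. reflexivity.
Qed.

Lemma commPU (K : fieldType) (V : lmodType K) (br : V -> V -> V) (F : nat -> V -> Prop)
  (A : algType K) (iota : V -> A)
  (Fbr : forall n m x y, (1 <= n)%N -> (1 <= m)%N -> F n x -> F m y ->
        F (n + m)%N (br x y))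
  (iotabr : forall x y, iota (br x y) = iota x * iota y - iota y * iota x) :
  forall k D b c e, (1 <= e)%N -> F e c -> PUk F iota k D b ->
  spanI (PUk F iota k (e + D)) (iota c * b - b * iota c).
Proof.
elim=> [|k IH] D b c e he hc [x [d [hxd hD ->]]].
  by rewrite big_ord0 mulr1 mul1r subrr; apply: spanI0.
rewrite big_ord_recl in hD.
rewrite big_ord_recl.
set x0 := x ord0; set b' := \prod_(i < k) iota (x (lift ord0 i)).
set Dt := (\sum_(i < k) d (lift ord0 i))%N.
have -> : iota c * (iota x0 * b') - iota x0 * b' * iota c =
  iota (br c x0) * b' + iota x0 * (iota c * b' - b' * iota c).
  by rewrite iotabr mulrBl mulrBr !mulrA addrA addrNK.
have [h0 F0] := hxd ord0.
apply: spanI_add.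
  apply: spanI_gen.
  exists (consf (br c x0) (fun j => x (lift ord0 j))),
    (consf (e + d ord0)%N (fun j => d (lift ord0 j))); split.
  - move=> i; rewrite /consf; case: (unlift ord0 i) => [j|]; first exact: hxd.
    by split; [lia | apply: Fbr].
  - by rewrite sum_consf; rewrite -/Dt; lia.
  - by rewrite prod_consf.
have hb' : PUk F iota k Dt b'.
  by exists (fun j => x (lift ord0 j)), (fun j => d (lift ord0 j)); split.
apply: (spanI_mono (S := PUk F iota k.+1 (d ord0 + (e + Dt)))).
  by move=> t ht; apply: PUk_mono ht _; lia.
apply: (spanI_map (f := fun t => iota x0 * t) _ _ _ (IH Dt b' c e he hc hb')).
- by rewrite mulr0.
- by move=> a u v; rewrite mulrDr -scalerAr.
- by move=> g hg; apply: spanI_gen; apply: PUk_cons.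
Qed.

Lemma PU_to_PR (K : fieldType) (V : lmodType K) (br : V -> V -> V) (F : nat -> V -> Prop)
  (R : V -> V) (A : algType K) (iota : V -> A)
  (Fbr : forall n m x y, (1 <= n)%N -> (1 <= m)%N -> F n x -> F m y ->
        F (n + m)%N (br x y))
  (RF : forall n x, (1 <= n)%N -> F n x -> F n (R x))
  (iotabr : forall x y, iota (br x y) = iota x * iota y - iota y * iota x) :
  forall k D b, PUk F iota k D b ->
  spanI (fun t => exists k', PRk F R iota k' D t) b.
Proof.
elim=> [|k IH] D b [x [d [hxd hD ->]]].
  apply: spanI_gen; exists 0%N, x, d; split => //.
  by rewrite big_ord0 star_word0.
rewrite big_ord_recl in hD.
rewrite big_ord_recl.
set x0 := x ord0; set b' := \prod_(i < k) iota (x (lift ord0 i)).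
set Dt := (\sum_(i < k) d (lift ord0 i))%N.
have [h0 F0] := hxd ord0.
have hb' : PUk F iota k Dt b'.
  by exists (fun j => x (lift ord0 j)), (fun j => d (lift ord0 j)); split.
have -> : iota x0 * b' = star_left R iota x0 b' -
   (iota (R x0) * b' - b' * iota (R x0)).
  by rewrite /star_left -[X in _ = X - _]addrA addrK.
apply: spanI_add; last apply: spanI_opp.
  apply: (spanI_mono (S := fun t => exists k', PRk F R iota k' (d ord0 + Dt) t)).
    by move=> t [k' ht]; exists k'; apply: PRk_mono ht _; lia.
  apply: (spanI_map (f := star_left R iota x0) _ _ _ (IH Dt b' hb')).
  - exact: star_left0.
  - exact: star_left_lin.
  - by move=> g [k' hg]; apply: spanI_gen; exists k'.+1; apply: PRk_cons.
apply: (spanI_mono (S := fun t => exists k', PRk F R iota k' (d ord0 + Dt) t)).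
  by move=> t [k' ht]; exists k'; apply: PRk_mono ht _; lia.
apply: (spanI_sub (S := PUk F iota k (d ord0 + Dt))).
  by move=> t ht; apply: IH.
apply: (commPU Fbr iotabr) => //; exact: RF.
Qed.

Lemma PR_to_PU (K : fieldType) (V : lmodType K) (F : nat -> V -> Prop)
  (R : V -> V) (A : algType K) (iota : V -> A)
  (RF : forall n x, (1 <= n)%N -> F n x -> F n (R x)) :
  forall k D b, PRk F R iota k D b ->
  spanI (fun t => exists k', PUk F iota k' D t) b.
Proof.
elim=> [|k IH] D b [x [d [hxd hD ->]]].
  apply: spanI_gen; exists 0%N, x, d; split => //.
  by rewrite big_ord0 star_word0.
rewrite big_ord_recl in hD.
rewrite star_wordS.
set x0 := x ord0; set b' := star_word R iota (fun j => x (lift ord0 j)).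
set Dt := (\sum_(i < k) d (lift ord0 i))%N.
have [h0 F0] := hxd ord0.
have hb' : PRk F R iota k Dt b'.
  by exists (fun j => x (lift ord0 j)), (fun j => d (lift ord0 j)); split.
apply: (spanI_mono (S := fun t => exists k', PUk F iota k' (d ord0 + Dt) t)).
  by move=> t [k' ht]; exists k'; apply: PUk_mono ht _; lia.
apply: (spanI_map (f := star_left R iota x0) _ _ _ (IH Dt b' hb')).
- exact: star_left0.
- exact: star_left_lin.
move=> g [k' hg]; rewrite /star_left.
have FR0 := RF _ _ h0 F0.
apply: spanI_add; last apply: spanI_opp.
  by apply: spanI_add; apply: spanI_gen; exists k'.+1; apply: PUk_cons.
by apply: spanI_gen; exists k'.+1; apply: PUk_snoc.
Qed.

Theorem corollary4p11 (K : fieldType) (V : lmodType K) (br : V -> V -> V)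
  (F : nat -> V -> Prop) (R : V -> V) (A : algType K) (iota : V -> A) :
  [pchar K] =i pred0 ->
  is_lie_bracket br ->
  lie_filtration br F ->
  filtered_rota_baxter br F R ->
  is_UEA br iota ->
  same_completion (FU F iota) (FUR F R iota).
Proof.
move=> _ _ [F1 Fsub Fdec Fbr] [Rlin _ RF] [[iotalin iotabr] _].
split=> n; exists n => u; (case: n => [|n]; first by rewrite /FUR /FU).
- rewrite /FU /FUR /= => /span_spanI h; apply: spanI_span.
  apply: (spanI_sub _ h) => b [k [x [d [hk hxd hD ->]]]].
  have : spanI (fun t => exists k', PRk F R iota k' n.+1 t) (\prod_(i < k) iota (x i)).
    by apply: (PU_to_PR Fbr RF iotabr); exists x, d.
  apply: spanI_mono => t [k' [y [e [hye he ->]]]].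
  case: k' y e hye he => [|k'] y e hye he; first by rewrite big_ord0 in he.
  by exists k'.+1, y, e.
- rewrite /FU /FUR /= => /span_spanI h; apply: spanI_span.
  apply: (spanI_sub _ h) => b [k [x [d [hk hxd hD ->]]]].
  have : spanI (fun t => exists k', PUk F iota k' n.+1 t) (star_word R iota x).
    by apply: (PR_to_PU RF); exists x, d.
  apply: spanI_mono => t [k' [y [e [hye he ->]]]].
  case: k' y e hye he => [|k'] y e hye he; first by rewrite big_ord0 in he.
  by exists k'.+1, y, e.
Qed.
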